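(* Let $\mathcal H_d$ be a Hilbert space of finite dimension $d$ and let $\mathsf C=(C_1,\dots,C_n)$ be an $n$-outcome observable (POVM) on $\mathcal H_d$. Then the boundariness of $\mathsf C$ in the convex set of $n$-outcome observables on $\mathcal H_d$ equals $b(\mathsf C)=\lambda_{\min}$, where $\lambda_{\min}$ is the smallest number among all eigenvalues of all the effects $C_1,\dots,C_n$.
   Context: An $n$-outcome observable on $\mathcal H_d$ is an $n$-tuple of positive operators $(C_1,\dots,C_n)$ with $\sum_j C_j=I$; the set of these is convex under componentwise convex combinations. For a convex set $Z$ and $x,y\in Z$, the weight function is $t_y(x)=\sup\{0\leq t<1 : \frac{y-tx}{1-t}\in Z\}$, and the boundariness of $y$ is $b(y)=\inf_{x\in Z}t_y(x)$. *)

(* Defs.v *)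
From HB Require Import structures.
From mathcomp Require Import all_boot all_order all_algebra.
From mathcomp Require Import boolp classical_sets reals.
From mathcomp Require Import complex.
Set Implicit Arguments. Unset Strict Implicit. Unset Printing Implicit Defensive.
Import Order.TTheory GRing.Theory Num.Theory.
Local Open Scope ring_scope.
Local Open Scope complex_scope.
Local Open Scope classical_set_scope.

(* A (bounded) operator on H_d = C^d is a d x d complex matrix. *)
(* Positive (semidefinite) operator: <v, A v> >= 0 for every vector v
   (in the complex order of R[i], i.e. real and nonnegative). *)
Definition psd (R : realType) (d : nat) (A : 'M[R[i]]_d) : Prop :=
  forall v : 'rV[R[i]]_d, 0 <= (v *m A *m (map_mx Num.conj v)^T) 0 0.

Definition observables (R : realType) (n d : nat) : set ('I_n -> 'M[R[i]]_d) :=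
  [set C | (forall j, psd (C j)) /\ \sum_(j < n) C j = 1%:M].

Definition wcomb (R : realType) (n d : nat) (t : R)
  (y x : 'I_n -> 'M[R[i]]_d) : 'I_n -> 'M[R[i]]_d :=
  fun j => ((1 - t)^-1)%:C *: (y j - t%:C *: x j).

Definition weight (R : realType) (n d : nat) (Z : set ('I_n -> 'M[R[i]]_d))
  (y x : 'I_n -> 'M[R[i]]_d) : R :=
  sup [set t : R | 0 <= t < 1 /\ Z (wcomb t y x)].

Definition boundariness (R : realType) (n d : nat) (Z : set ('I_n -> 'M[R[i]]_d))
  (y : 'I_n -> 'M[R[i]]_d) : R :=
  inf [set weight Z y x | x in Z].

(* Main.v *)
Require Import Defs.
From HB Require Import structures.
From mathcomp Require Import all_boot all_order all_algebra.
From mathcomp Require Import boolp classical_sets reals.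
From mathcomp Require Import complex.
Import Order.TTheory GRing.Theory Num.Theory.
Set Implicit Arguments. Unset Strict Implicit. Unset Printing Implicit Defensive.
Local Open Scope ring_scope.
Local Open Scope complex_scope.
Local Open Scope classical_set_scope.

Section Aux.
Variable R : realType.
Local Notation C := (R[i]).

Definition wt d (v : 'rV[C]_d) : 'cV[C]_d := (map_mx Num.conj v)^T.
Definition bf d (A : 'M[C]_d) (u w : 'rV[C]_d) : C := (u *m A *m wt w) 0 0.

Lemma wtD d (u w : 'rV[C]_d) : wt (u + w) = wt u + wt w.
Proof. by rewrite /wt map_mxD linearD. Qed.

Lemma wtZ d c (u : 'rV[C]_d) : wt (c *: u) = Num.conj c *: wt u.
Proof. by rewrite /wt map_mxZ linearZ. Qed.

Lemma bfDl d A (u1 u2 w : 'rV[C]_d) : bf A (u1 + u2) w = bf A u1 w + bf A u2 w.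
Proof. by rewrite /bf !mulmxDl mxE. Qed.

Lemma bfDr d A (u w1 w2 : 'rV[C]_d) : bf A u (w1 + w2) = bf A u w1 + bf A u w2.
Proof. by rewrite /bf wtD mulmxDr mxE. Qed.

Lemma bfZl d A c (u w : 'rV[C]_d) : bf A (c *: u) w = c * bf A u w.
Proof. by rewrite /bf -!scalemxAl mxE. Qed.

Lemma bfZr d A c (u w : 'rV[C]_d) : bf A u (c *: w) = Num.conj c * bf A u w.
Proof. by rewrite /bf wtZ -scalemxAr mxE. Qed.

Lemma bfDA d (A B : 'M[C]_d) u w : bf (A + B) u w = bf A u w + bf B u w.
Proof. by rewrite /bf mulmxDr mulmxDl mxE. Qed.

Lemma bfZA d (A : 'M[C]_d) c u w : bf (c *: A) u w = c * bf A u w.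
Proof. by rewrite /bf -scalemxAr -scalemxAl mxE. Qed.

Lemma bfNA d (A : 'M[C]_d) u w : bf (- A) u w = - bf A u w.
Proof. by rewrite /bf mulmxN mulNmx mxE. Qed.

Lemma bfsumA d n (A : 'I_n -> 'M[C]_d) u w :
  bf (\sum_j A j) u w = \sum_j bf (A j) u w.
Proof.
by rewrite /bf mulmx_sumr mulmx_suml summxE.
Qed.

Lemma bf0A d (u w : 'rV[C]_d) : bf 0 u w = 0.
Proof. by rewrite /bf mulmx0 mul0mx mxE. Qed.

Lemma bf_delta d (A : 'M[C]_d) i j : bf A (delta_mx 0 i) (delta_mx 0 j) = A i j.
Proof.
rewrite /bf /wt map_delta_mx ?conjC0 // trmx_delta -rowE -colE !mxE.
by [].
Qed.

Lemma psd_bf d (A : 'M[C]_d) : psd A <-> forall v, 0 <= bf A v v.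
Proof. by []. Qed.


Lemma bf_adj d (A : 'M[C]_d) v :
  bf ((map_mx Num.conj A)^T) v v = Num.conj (bf A v v).
Proof.
rewrite /bf /wt.
have -> : Num.conj ((v *m A *m (map_mx Num.conj v)^T) 0 0) =
  ((map_mx Num.conj (v *m A *m (map_mx Num.conj v)^T))^T) 0 0 by rewrite !mxE.
have cc m n (M : 'M[C]_(m, n)) : map_mx Num.conj (map_mx Num.conj M) = M.
  by apply/matrixP => i j; rewrite !mxE conjCK.
by rewrite !map_mxM !trmx_mul -map_trmx trmxK cc mulmxA.
Qed.

Lemma bf_null d (H : 'M[C]_d) : (forall v, bf H v v = 0) -> H = 0.
Proof.
move=> H0; apply/matrixP => i j; rewrite mxE -bf_delta.
set ei := delta_mx 0 i; set ej := delta_mx 0 j.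
have h1 := H0 (ei + ej).
rewrite !bfDl !bfDr !H0 !(add0r, addr0) in h1.
have h2 := H0 (ei + 'i *: ej).
rewrite !bfDl !bfDr !bfZl !bfZr !H0 !(mulr0, add0r, addr0) conjCi in h2.
move/eqP: h1; rewrite addr_eq0 => /eqP h1.
rewrite h1 mulNr mulrN opprK -mulr2n in h2; rewrite h1.
move/eqP: h2; rewrite mulrn_eq0 /= mulf_eq0 => /orP[/eqP h|/eqP ->]; last by rewrite oppr0.
by move: (neq0Ci C); rewrite h eqxx.
Qed.

Lemma psd_normal d (A : 'M[C]_d) : psd A -> A \is normalmx.
Proof.
move=> hA.
have eA : A = (map_mx Num.conj A)^T.
  apply/eqP; rewrite -subr_eq0; apply/eqP/bf_null => v.
  rewrite bfDA bfNA bf_adj conj_Creal ?subrr //.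
  exact: ger0_real (hA v).
by rewrite qualifE -map_trmx -eA.
Qed.


Lemma ccmx m n (M : 'M[C]_(m, n)) : map_mx Num.conj (map_mx Num.conj M) = M.
Proof. by apply/matrixP => i j; rewrite !mxE conjCK. Qed.

Lemma rayleigh d (A : 'M[C]_d) (mu : C) : psd A ->
  (forall a, eigenvalue A a -> mu <= a) -> forall v, mu * bf 1%:M v v <= bf A v v.
Proof.
move=> hA hmu v.
have /orthomx_spectralP eA := psd_normal hA.
have Pu : spectralmx A \in unitmx := spectral_unit A.
have iP : invmx (spectralmx A) = map_mx Num.conj ((spectralmx A)^T).
  exact: invmx_unitary (spectral_unitarymx A).
set P := spectralmx A in eA Pu iP; set D := spectral_diag A in eA.
set w := v *m invmx P.
have ew : wt w = P *m wt v.
  by rewrite /w /wt iP map_mxM ccmx trmx_mul trmxK.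
have c1 : bf A v v = bf (diag_mx D) w w.
  by rewrite /bf ew eA /w !mulmxA.
have c2 : bf 1%:M v v = bf 1%:M w w.
  by rewrite /bf ew /w !mulmx1 mulmxA mulmxKV.
rewrite c1 c2 /bf mulmx1 mxE mulr_sumr mxE; apply: ler_sum => k _.
rewrite mul_mx_diag !mxE mulrAC [leRHS]mulrC.
rewrite ler_wpM2r ?mul_conjC_ge0 //; apply: hmu.
apply/eigenvalueP; exists (delta_mx 0 k *m P).
  rewrite eA !mulmxA mulmxK // mul_mx_diag scalemxAl; congr (_ *m _).
  apply/matrixP => i j; rewrite !mxE.
  case: andP => [[_ /eqP ->]|_] /=; first by rewrite mulrC.
  by rewrite mul0r mulr0.
apply/eqP => /(congr1 (mulmx^~ (invmx P))); rewrite mulmxK // mul0mx.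
move/matrixP/(_ 0 k); rewrite !mxE !eqxx /= => /eqP; rewrite oner_eq0.
by [].
Qed.


Lemma bf1_ge0 d (v : 'rV[C]_d) : 0 <= bf 1%:M v v.
Proof.
rewrite /bf mulmx1 mxE; apply: sumr_ge0 => k _.
by rewrite !mxE mul_conjC_ge0.
Qed.

Lemma bf1_gt0 d (v : 'rV[C]_d) : v != 0 -> 0 < bf 1%:M v v.
Proof.
move=> vnz; have := dotmx_is_dotmx vnz; rewrite dotmxE.
by rewrite /bf mulmx1 /wt map_trmx.
Qed.

Lemma obs_le1 n d (x : 'I_n -> 'M[C]_d) : observables x ->
  forall j v, bf (x j) v v <= bf 1%:M v v.
Proof.
move=> [hp hs] j v; rewrite -hs bfsumA (bigD1 j) //= lerDl.
by apply: sumr_ge0 => k _; exact: hp.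
Qed.

Lemma lecR0 (a : R) : (0 <= a%:C) = (0 <= a).
Proof. by rewrite -lecR. Qed.

Lemma lecR1 (a : R) : (a%:C <= 1) = (a <= 1).
Proof. by rewrite -lecR. Qed.

End Aux.

From mathcomp Require Import lra.

Theorem proposition4 (R : realType) (n d : nat) (C : 'I_n -> 'M[R[i]]_d)
  (lam_min : R) :
  @observables R n d C ->
  (exists j : 'I_n, eigenvalue (C j) lam_min%:C) ->
  (forall (j : 'I_n) (a : R[i]), eigenvalue (C j) a -> lam_min%:C <= a) ->
  boundariness (@observables R n d) C = lam_min.
Proof.
move=> hC [j0 hj0] hmin.
have [hCp hCs] := hC.
set lam := lam_min in hj0 hmin *.
have [v0 hv0 v0nz] := eigenvalueP hj0.
have q1pos := bf1_gt0 v0nz.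
have qC : bf (C j0) v0 v0 = lam%:C * bf 1%:M v0 v0.
  by rewrite /bf hv0 mulmx1 -scalemxAl mxE.
have lam0 : 0 <= lam.
  by have := hCp j0 v0; rewrite -/(bf _ _ _) qC pmulr_lge0 // lecR0.
have lam1 : lam <= 1.
  have := obs_le1 hC j0 v0; rewrite qC -{2}[bf 1%:M v0 v0]mul1r ler_pM2r //.
  by rewrite lecR1.
pose S x := [set t : R | 0 <= t < 1 /\ observables (wcomb t C x)].
have memS : forall x, observables x -> forall t, 0 <= t -> t < 1 -> t <= lam -> S x t.
  move=> x hx t t0 t1 tl; split; first by rewrite t0 t1.
  have [hxp hxs] := hx.
  split.
    move=> j v; rewrite /wcomb -/(bf _ _ _) bfZA bfDA bfNA bfZA.
    apply: mulr_ge0; first by rewrite lecR0 invr_ge0; lra.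
    rewrite subr_ge0; apply: (le_trans (y := t%:C * bf 1%:M v v)).
      by rewrite ler_wpM2l ?lecR0 ?obs_le1.
    apply: (le_trans (y := lam%:C * bf 1%:M v v)); last exact: (rayleigh (hCp j) (hmin j)).
    by rewrite ler_wpM2r ?bf1_ge0 ?lecR.
  rewrite /wcomb -scaler_sumr sumrB -scaler_sumr hCs hxs.
  rewrite -{1}[1%:M]scale1r -scalerBl scalerA.
  have -> : 1 - t%:C = (1 - t)%:C by rewrite rmorphB rmorph1.
  by rewrite -rmorphM mulVf ?scale1r // subr_eq0 gt_eqF.
have hasS : forall x, observables x -> has_sup (S x).
  move=> x hx; split; first by exists 0; apply: memS.
  by exists 1 => t [/andP[_ /ltW]].
have wge : forall x, observables x -> lam <= weight (@observables R n d) C x.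
  move=> x hx; rewrite /weight -/(S x).
  have s0 : 0 <= sup (S x) by apply: sup_upper_bound (hasS x hx) _ _; apply: memS.
  rewrite leNgt; apply/negP => slt.
  have /(sup_upper_bound (hasS x hx)) : S x ((sup (S x) + lam) / 2).
    by apply: (memS x hx); lra.
  lra.
pose x0 := fun j : 'I_n => if j == j0 then 1%:M else 0 : 'M[R[i]]_d.
have hx0 : observables x0.
  split.
    by move=> j v; rewrite /x0; case: (j == j0); [exact: bf1_ge0 | rewrite -/(bf _ _ _) bf0A].
  by rewrite (bigD1 j0) //= /x0 eqxx big1 ?addr0 // => j /negbTE ->.
have wle : weight (@observables R n d) C x0 <= lam.
  rewrite /weight -/(S x0); apply: ge_sup; first by exists 0; apply: memS.
  move=> t [/andP[t0 t1]] [hp _].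
  have := hp j0 v0; rewrite /wcomb /x0 eqxx -/(bf _ _ _) bfZA bfDA bfNA bfZA qC.
  rewrite -mulrBl -rmorphB pmulr_rge0; last by rewrite ltcR invr_gt0; lra.
  by rewrite pmulr_lge0 // lecR0 subr_ge0.
rewrite /boundariness; apply/le_anti/andP; split.
  apply: le_trans wle; apply: ge_inf; last by exists x0.
  by exists 0 => _ [x hx <-]; apply: le_trans (wge x hx).
by apply: lb_le_inf; [exists (weight (@observables R n d) C x0), x0 | move=> _ [x hx <-]; exact: wge].
Qed.
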